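(* Let $G=(V,E)$ be a simple undirected graph and let $i\in V$ have degree $\delta$. Assume that no two nodes of $N(i)$ are adjacent (equivalently in the paper's terms, $f_2(S^i,k)=0$ for all $k\in N(i)$). Consider the greedy procedure that starts with $S=\{i\}$ and repeatedly adds to $S$ a node $k\in N(i)\setminus S$ maximizing $f_1(S,k)$ among those with $f_1(S,k)>0$, until no such node exists. Then this procedure has approximation ratio $O(\ln\delta)$ with respect to the star degree centrality $\mathcal{C}^s(i)$, i.e., $\mathcal{C}^s(i)/|N(S)|=O(\ln\delta)$ for the returned $S$.
   Context: For $S\subseteq V$, $N(S)=\{j\in V\setminus S : (a,j)\in E \text{ for some } a\in S\}$. A set $S$ forms an induced star if $G[S]$ has exactly one node of degree $|S|-1$ and $|S|-1$ nodes of degree $1$. $\mathcal{C}^s(i)=\max\{|N(S)| : S \text{ forms an induced star centered at } i\}$. For an induced star $S^i$ centered at $i$ and a node $k$: $f_1(S,k)=|N(S\cup\{k\})|-|N(S)|$ and $f_2(S^i,k)=\sum_{j:(i,j)\in E,(k,j)\in E}|N(S^i\cup\{j\})\setminus N(S^i)|$. *)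

(* Defs.v *)
From Stdlib Require Import Reals.
From mathcomp Require Import all_boot all_order all_algebra.
Set Implicit Arguments. Unset Strict Implicit. Unset Printing Implicit Defensive.

Section Graph.
Variables (T : finType) (e : rel T).

Definition nbhd (S : {set T}) : {set T} :=
  [set j | (j \notin S) && [exists a in S, e a j]].

Definition deg_in (S : {set T}) (x : T) : nat := #|[set y in S | e x y]|.

Definition deg (i : T) : nat := #|[set j | e i j]|.

Definition induced_star (i : T) (S : {set T}) : bool :=
  [&& i \in S, deg_in S i == #|S| - 1 &
      [forall x in S, (x != i) ==> (deg_in S x == 1)]].

Definition star_centrality (i : T) : nat :=
  \max_(S : {set T} | induced_star i S) #|nbhd S|.

Definition f1 (S : {set T}) (k : T) : int :=
  (#|nbhd (k |: S)|%:Z - #|nbhd S|%:Z)%R.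

Definition greedy_step (i : T) (S S' : {set T}) : Prop :=
  exists k, [/\ e i k, k \notin S, (0 < f1 S k)%R,
    (forall k', e i k' -> k' \notin S -> (0 < f1 S k')%R -> (f1 S k' <= f1 S k)%R)
    & S' = k |: S].

(* sets reachable from {i} by greedy steps (any tie-breaking) *)
Inductive greedy_reach (i : T) : {set T} -> Prop :=
| greedy_start : greedy_reach i [set i]
| greedy_next S S' : greedy_reach i S -> greedy_step i S S' -> greedy_reach i S'.

Definition greedy_output (i : T) (S : {set T}) : Prop :=
  greedy_reach i S /\
  (forall k, e i k -> k \notin S -> ~ (0 < f1 S k)%R).

End Graph.

(* Main.v *)
Require Import Defs.
From Stdlib Require Import Reals.
From mathcomp Require Import all_boot all_order all_algebra.
From mathcomp Require Import zify.
From Stdlib Require Import Lra.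

Section Aux.
Import GRing.Theory Num.Theory.
Set Implicit Arguments.
Variables (T : finType) (e : rel T).
Hypothesis irr : irreflexive e.
Variable i : T.

Definition Ni : {set T} := [set j | e i j].
Definition Out (S : {set T}) : {set T} :=
  [set j | [&& j \notin Ni, j != i & [exists a in S, e a j]]].

Lemma card_bigcup_le (X : {set T}) (F : T -> {set T}) :
  #|\bigcup_(k in X) F k| <= \sum_(k in X) #|F k|.
Proof.
elim/big_rec2: _ => [|k n A _ IH]; first by rewrite cards0.
rewrite cardsU; lia.
Qed.

Lemma dec (S : {set T}) : i \in S -> S \subset i |: Ni ->
  #|nbhd e S| + #|S :\ i| = deg e i + #|Out S|.
Proof.
move=> iS sub.
have E : nbhd e S = (Ni :\: S) :|: Out S.
  apply/setP => j; rewrite /Out /Ni !inE.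
  apply/idP/idP.
  - case/andP=> jS /existsP [a /andP [aS eaj]].
    case: (boolP (e i j)) => eij; first by rewrite jS.
    apply/orP; right; apply/and3P; split => //.
      by apply: contraNneq jS => ->.
    by apply/existsP; exists a; rewrite aS.
  - case/orP.
    + case/andP=> jS eij; rewrite jS /=; apply/existsP; exists i; by rewrite iS.
    + case/and3P=> nj jni /existsP [a /andP [aS eaj]].
      have jS : j \notin S.
        apply/negP => jS; move/subsetP: sub => /(_ j jS); rewrite /Ni !inE.
        by rewrite (negbTE jni) /= => H; rewrite H in nj.
      rewrite jS /=; apply/existsP; exists a; by rewrite aS.
have D : [disjoint Ni :\: S & Out S].
  rewrite -setI_eq0; apply/eqP/setP => j; rewrite !inE.
  by case: (e i j); rewrite ?andbF.
have I : Ni :&: S = S :\ i.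
  apply/setP => j; rewrite !inE; apply/idP/idP.
  - case/andP=> eij jS; rewrite jS andbT.
    by apply: contraTneq eij => ->; rewrite irr.
  - case/andP=> ji jS; rewrite jS andbT.
    move/subsetP: sub => /(_ j jS); rewrite !inE (negbTE ji) //.
rewrite E (cardsU (Ni :\: S)).
have -> : (Ni :\: S) :&: Out S = set0 by apply/eqP; rewrite setI_eq0.
rewrite cards0 subn0 -I.
have := cardsID S Ni. rewrite /deg -/Ni. lia.
Qed.

Lemma OutU k (S : {set T}) : Out (k |: S) = Out [set k] :|: Out S.
Proof.
apply/setP => j; rewrite !inE.
rewrite -andb_orr; congr (_ && _); rewrite -andb_orr; congr (_ && _).
apply/idP/idP.
- case/existsP=> a /andP [] /setU1P [-> ekj|aS eaj].
    by apply/orP; left; apply/existsP; exists k; rewrite inE eqxx.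
  by apply/orP; right; apply/existsP; exists a; rewrite aS.
- case/orP=> /existsP [a /andP [aS eaj]]; apply/existsP; exists a; rewrite inE ?aS ?orbT ?eaj ?andbT //.
Qed.

Lemma Out_mono (A B : {set T}) : A \subset B -> Out A \subset Out B.
Proof.
move/subsetP=> sAB; apply/subsetP => j; rewrite !inE.
case/and3P=> -> -> /existsP [a /andP [aA eaj]] /=.
by apply/existsP; exists a; rewrite sAB.
Qed.

Lemma f1_pos (S : {set T}) k : (0 < f1 e S k)%R -> #|nbhd e S| < #|nbhd e (k |: S)|.
Proof. by rewrite /f1 subr_gt0 ltz_nat. Qed.

Lemma f1_npos (S : {set T}) k : ~ (0 < f1 e S k)%R -> #|nbhd e (k |: S)| <= #|nbhd e S|.
Proof. by rewrite /f1 subr_gt0 ltz_nat => /negP; rewrite -leqNgt. Qed.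

Arguments f1_pos [S k].
Arguments f1_npos [S k].
Arguments dec [S].

Lemma reach_inv (S : {set T}) : greedy_reach e i S ->
  [/\ i \in S, S \subset i |: Ni & (2 * #|S :\ i| <= #|Out S|)%N].
Proof.
elim=> [|S0 S' _ [iS sub inv] [k [eik kS pos _ ->]]].
  split; first by rewrite inE.
    by apply/subsetP => x; rewrite !inE => ->.
  by rewrite setDv cards0.
have ki : k != i by apply: contraTneq eik => ->; rewrite irr.
have iS' : i \in k |: S0 by rewrite inE iS orbT.
have sub' : k |: S0 \subset i |: Ni.
  by rewrite subUset sub andbT sub1set !inE eik orbT.
split=> //.
have := dec iS sub; have := dec iS' sub'; have := f1_pos pos.
have -> : (k |: S0) :\ i = k |: (S0 :\ i).
  by apply/setP => x; rewrite !inE; case: (eqVneq x k) => [->|xk] /=; by rewrite ?ki.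
have kn : k \notin S0 :\ i by rewrite !inE negb_and kS orbT.
rewrite cardsU1 kn. lia.
Qed.

Lemma star_sub (S : {set T}) : induced_star e i S -> i \in S /\ S \subset i |: Ni.
Proof.
case/and3P=> iS /eqP dg _; split=> //.
have H : [set y in S | e i y] \subset S :\ i.
  apply/subsetP => y; rewrite !inE => /andP [yS eiy]; rewrite yS andbT.
  by apply: contraTneq eiy => ->; rewrite irr.
have C : #|[set y in S | e i y]| = #|S :\ i|.
  by rewrite /deg_in in dg; rewrite dg (cardsD1 i S) iS add1n subSS subn0.
have EQ := subset_cardP C H.
apply/subsetP => y yS; rewrite !inE.
case: (eqVneq y i) => //= yi.
have : y \in S :\ i by rewrite !inE yi yS.
by rewrite -EQ inE => /andP [].
Qed.

Arguments star_sub [S].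
Arguments reach_inv [S].

Lemma main (S S2 : {set T}) : greedy_output e i S -> induced_star e i S2 ->
  #|nbhd e S2| <= 2 * #|nbhd e S|.
Proof.
case=> R out st.
case: (reach_inv R) => iS sub inv.
case: (star_sub st) => iS2 sub2.
have B : forall k, k \in S2 :\ i -> #|Out [set k] :\: Out S| <= 1.
  move=> k; rewrite !inE => /andP [ki kS2].
  have eik : e i k by move/subsetP: sub2 => /(_ k kS2); rewrite !inE (negbTE ki).
  case kS: (k \in S).
    suff -> : Out [set k] :\: Out S = set0 by rewrite cards0.
    apply/eqP; rewrite setD_eq0; apply: Out_mono; by rewrite sub1set.
  have := f1_npos (out k eik (negbT kS)).
  have iS' : i \in k |: S by rewrite inE iS orbT.
  have sub' : k |: S \subset i |: Ni.
    by rewrite subUset sub andbT sub1set !inE eik orbT.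
  have := dec iS sub; have := dec iS' sub'.
  have -> : (k |: S) :\ i = k |: (S :\ i) by
    apply/setP => x; rewrite !inE; case: (eqVneq x k) => [->|xk] /=; by rewrite ?ki.
  have kn : k \notin S :\ i by rewrite !inE kS andbF.
  rewrite cardsU1 kn OutU cardsU.
  have := cardsID (Out S) (Out [set k]). rewrite setIC. lia.
have Sub : Out S2 \subset Out S :|: \bigcup_(k in S2 :\ i) (Out [set k] :\: Out S).
  apply/subsetP => j jO2; rewrite in_setU.
  case jO: (j \in Out S) => //=.
  move: jO2; rewrite {1}/Out inE => /and3P [jN ji /existsP [a /andP [aS2 eaj]]].
  apply/bigcupP; exists a.
    rewrite !inE aS2 andbT; apply/eqP => ai; move: jN; rewrite /Ni inE -ai.
    by move/negP.
  rewrite in_setD jO /= /Out inE; apply/and3P; split => //.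
  by apply/existsP; exists a; rewrite inE eqxx.
have C1 := subset_leq_card Sub.
have C2 := card_bigcup_le (S2 :\ i) (fun k => Out [set k] :\: Out S).
have C3 : \sum_(k in S2 :\ i) #|Out [set k] :\: Out S| <= \sum_(k in S2 :\ i) 1.
  by apply: leq_sum => k /B.
rewrite sum1_card in C3.
have C4 := leq_card_setU (Out S) (\bigcup_(k in S2 :\ i) (Out [set k] :\: Out S)).
case: C4 => C4 _.
have := dec iS sub; have := dec iS2 sub2.
have : #|S :\ i| <= deg e i.
  rewrite /deg -/Ni; apply: subset_leq_card; apply/subsetP => x; rewrite !inE.
  case/andP=> xi xS; move/subsetP: sub => /(_ x xS); rewrite !inE (negbTE xi) //.
lia.
Qed.

End Aux.

Local Open Scope R_scope.

Theorem lemma1 :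
  exists c : R, 0 < c /\
  forall (T : finType) (e : rel T), symmetric e -> irreflexive e ->
  forall i : T,
    (forall j k, e i j -> e i k -> ~~ e j k) ->
    forall S : {set T}, greedy_output e i S ->
    INR (star_centrality e i)
       <= c * (1 + ln (INR (deg e i))) * INR #|nbhd e S|.
Proof.
exists 2; split; first lra.
move=> T e _ irr i _ S out.
have H : (star_centrality e i <= 2 * #|nbhd e S|)%N.
  apply/bigmax_leqP => S2 st; exact: (@main T e irr i S S2 out st).
have L : 0 <= ln (INR (deg e i)).
  case: (deg e i) => [|n].
    rewrite /INR; unfold ln; case: Rlt_dec => h; [exfalso; lra | lra].
  have h1 : 1 <= INR n.+1 by rewrite S_INR; have := pos_INR n; lra.
  case: (Req_dec (INR n.+1) 1) => [->|hne]; first by rewrite ln_1; lra.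
  rewrite -ln_1; left; apply: ln_increasing; lra.
have H' := le_INR _ _ (elimT leP H).
rewrite mult_INR /= in H'.
have := pos_INR #|nbhd e S|; nra.
Qed.
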